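(* Let $k\ge1$ and $r\ge0$ be integers, and let $\mathcal{C}$ be a multiset of $2^k+r$ non-zero residues modulo $2^{k+1}$ such that no sub-collection sums to $2^k$ modulo $2^{k+1}$, and such that for no odd $\lambda$ can $\lambda\cdot\mathcal{C}$ be type 1 compressed. Then at least one of the following holds: $\mathcal{C}$ contains at least $2^{k-1}+r$ even residues; or there is an odd residue $t$ modulo $2^{k+1}$ such that $\mathcal{C}$ contains at least $2^{k-1}+r$ elements each lying in $\{t,-t,2^k-t,-(2^k-t)\}$; or there are three elements $x_1,x_2,x_3$ of $\mathcal{C}$ (three distinct members of the multiset) with $|\{x_1,x_2,x_3\}^*|\ge6$.
   Context: For a multiset $\mathcal{D}=\{a_1,\dots,a_d\}$ of residues modulo $2^{k+1}$, $\mathcal{D}^*=\{\sum_{i\in I}a_i \bmod 2^{k+1}: I\subseteq[d]\}$ (including $0$). $\lambda\cdot\mathcal{C}=\{\lambda c:c\in\mathcal{C}\}$. For a residue $t$, $|t|$ is the minimal absolute value of an integer in its residue class. A multiset $\mathcal{D}$ can be type 1 compressed if for some $\lambda>0$ it contains at least $\lambda$ elements each equal to $\pm1$ and also an element $t$ with $1<|t|\le\lambda+1$. *)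

(* Defs.v *)
From HB Require Import structures.
From mathcomp Require Import all_boot all_order all_algebra.
Set Implicit Arguments. Unset Strict Implicit. Unset Printing Implicit Defensive.
Import Order.TTheory GRing.Theory Num.Theory.
Local Open Scope ring_scope.

(* D^* : the set of all subset sums (sub-multisets chosen by a bitmask,
   including the empty one, giving 0). *)
Definition subsums (n : nat) (D : seq 'Z_n) : {set 'Z_n} :=
  [set x | [exists b : (size D).-tuple bool, \sum_(y <- mask b D) y == x]].

Definition absres (n : nat) (t : 'Z_n) : nat := minn (val t) (n - val t).

Definition dilate (n : nat) (lam : nat) (C : seq 'Z_n) : seq 'Z_n :=
  map (fun c => lam%:R * c) C.

Definition type1_compressible (n : nat) (D : seq 'Z_n) : Prop :=
  exists lam : nat, (0 < lam)%N /\
    (lam <= count (fun x : 'Z_n => (x == 1%R) || (x == (-1)%R)) D)%N /\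
    exists2 t, t \in D & ((1 < absres t) && (absres t <= lam.+1))%N.

(* Main.v *)
Require Import Defs.
From HB Require Import structures.
From mathcomp Require Import all_boot all_order all_algebra.
From mathcomp Require Import ring zify.
Import Order.TTheory GRing.Theory Num.Theory.
Local Open Scope ring_scope.

Lemma gt1k k : (1 < 2 ^ k.+1)%N.
Proof. by rewrite -{1}(expn0 2) ltn_exp2l. Qed.

Lemma valZ {k} (z : 'Z_(2^k.+1)) : z = (val z)%:R.
Proof. by rewrite natr_Zp. Qed.

Lemma val_lt {k} (z : 'Z_(2^k.+1)) : (val z < 2 ^ k.+1)%N.
Proof. by rewrite -[X in (_ < X)%N](Zp_cast (gt1k k)) ltn_ord. Qed.

Lemma val_mul2 {k} (z : 'Z_(2^k.+1)) : val (z *+ 2) = ((val z).*2 %% 2 ^ k.+1)%N.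
Proof.
have -> : z *+ 2 = ((val z).*2)%:R by rewrite -muln2 natrM natr_Zp mulr_natr.
exact: (val_Zp_nat (gt1k k)).
Qed.

Lemma h_val k : val ((2 ^ k)%N%:R : 'Z_(2^k.+1)) = (2 ^ k)%N.
Proof. by apply: (etrans (val_Zp_nat (gt1k k) _)); rewrite modn_small // ltn_exp2l. Qed.

Lemma nat_aux P v : (0 < P)%N -> (v < 2 * P)%N -> (2 * P %| v.*2)%N -> v = 0%N \/ v = P.
Proof.
move=> P0 hl; rewrite -muln2 [(v * 2)%N]mulnC dvdn_pmul2l // => /dvdnP [q hq].
rewrite hq in hl.
have hq2 : (q < 2)%N by rewrite -(ltn_pmul2r P0).
case: q hq hq2 hl => [|[|q]] hq hq2 _.
- by left; rewrite hq mul0n.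
- by right; rewrite hq mul1n.
- by [].
Qed.

Lemma two_eq0 {k} (z : 'Z_(2^k.+1)) : z *+ 2 = 0 -> z = 0 \/ z = (2 ^ k)%N%:R.
Proof.
move=> /(congr1 val); rewrite val_mul2 /= => /eqP; rewrite -/(dvdn _ _) => hd.
have hl := val_lt z.
have := @nat_aux _ (val z) (expn_gt0 2 k); rewrite -expnS => /(_ hl hd) [h0|h1].
  by left; apply: val_inj; rewrite h0.
by right; apply: val_inj; rewrite h_val h1.
Qed.

Lemma mul2_odd {k} (z a : 'Z_(2^k.+1)) : odd (val a) -> z *+ 2 != a.
Proof.
move=> oa; apply/eqP => E; move: oa; rewrite -E val_mul2 odd_mod ?odd_double //.
by rewrite oddX.
Qed.
Lemma in_sub3 {n} (a x y : 'Z_n) b1 b2 b3 :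
  \sum_(z <- mask [:: b1; b2; b3] [:: a; x; y]) z \in subsums [:: a; x; y].
Proof. by rewrite inE; apply/existsP; exists [tuple b1; b2; b3]. Qed.

Lemma card_ge {n} (A : {set 'Z_n}) (s : seq 'Z_n) :
  uniq s -> all (mem A) s -> (size s <= #|A|)%N.
Proof.
move=> us /allP sA; rewrite -(card_uniqP us); apply: subset_leq_card.
by apply/subsetP => z /sA.
Qed.

Ltac ne_tac :=
  rewrite -subr_eq0;
  match goal with |- is_true (?l != 0) =>
    first [ match goal with H : is_true (?w != 0) |- _ =>
              (have -> : l = w by ring); exact H end
          | match goal with H : is_true (?w != 0) |- _ =>
              (have -> : l = - w by ring); rewrite oppr_eq0; exact H end ]
  end.

Ltac uniq_tac :=
  rewrite /= ?big_cons ?big_nil !inE !negb_or ?andbT ?addr0;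
  repeat (apply/andP; split); ne_tac.

Lemma sub6 {n} (a x y : 'Z_n) (N1 N2 : 'Z_n) :
  N1 \in subsums [:: a; x; y] -> N2 \in subsums [:: a; x; y] ->
  uniq [:: 0; a; x; a + x; N1; N2] -> (6 <= #|subsums [:: a; x; y]|)%N.
Proof.
move=> h1 h2 u; have := card_ge (subsums [:: a; x; y]) _ u. 
rewrite /= h1 h2 !andbT; apply.
have := in_sub3 a x y false false false; rewrite /= big_nil => ->.
have := in_sub3 a x y true false false; rewrite /= big_cons big_nil addr0 => ->.
have := in_sub3 a x y false true false; rewrite /= big_cons big_nil addr0 => ->.
by have := in_sub3 a x y true true false; rewrite /= !big_cons big_nil addr0 => ->.
Qed.

Lemma core {k} (a x y : 'Z_(2^k.+1)) :
  odd (val a) -> x != 0 -> x != a -> x != -a -> x != a *+ 2 -> x != - (a *+ 2) ->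
  x *+ 2 != 0 -> a *+ 2 != 0 -> (a + x) *+ 2 != 0 -> y != 0 -> y *+ 2 != 0 ->
  (6 <= #|subsums [:: a; x; y]|)%N.
Proof.
move=> oa x0 xa xna x2a xn2a x2 a2 ax2 y0 y2.
have a0 : a != 0 by apply: contraNneq a2 => ->; rewrite mul0rn.
have f1 : a - x *+ 2 != 0 by rewrite subr_eq0 eq_sym mul2_odd.
have f2 : a + x *+ 2 != 0 by rewrite -[x]opprK mulNrn subr_eq0 eq_sym mul2_odd.
move: xa; rewrite -subr_eq0 => xa. move: xna; rewrite -subr_eq0 => xna.
move: x2a; rewrite -subr_eq0 => x2a. move: xn2a; rewrite -subr_eq0 => xn2a.
have f4 : a + x != 0 by ne_tac.
have f6 : a *+ 2 + x != 0 by ne_tac.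
have U : forall b1 b2 b3 c1 c2 c3 (y' : 'Z_(2^k.+1)),
  uniq [:: 0; a; x; a + x; \sum_(z <- mask [:: b1; b2; b3] [:: a; x; y']) z;
                           \sum_(z <- mask [:: c1; c2; c3] [:: a; x; y']) z] ->
  (6 <= #|subsums [:: a; x; y']|)%N.
  by move=> b1 b2 b3 c1 c2 c3 y'; apply: sub6; apply: in_sub3.
case: (boolP (y \in [:: a; x; a + x; -a; x - a])).
  rewrite !inE => /orP [/eqP E|/orP [/eqP E|/orP [/eqP E|/orP [/eqP E|/eqP E]]]];
    rewrite E in y0 y2 *.
  - apply: (U true false true true true true); uniq_tac.
  - apply: (U false true true true true true); uniq_tac.
  - apply: (U true false true false true true); uniq_tac.
  - apply: (U false false true false true true); uniq_tac.
  - apply: (U false false true false true true); uniq_tac.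
rewrite !inE !negb_or => /and5P [ya yx yax yna yxa].
move: ya; rewrite -subr_eq0 => ya. move: yx; rewrite -subr_eq0 => yx.
move: yax; rewrite -subr_eq0 => yax. move: yna; rewrite -subr_eq0 => yna.
move: yxa; rewrite -subr_eq0 => yxa.
apply: (U false false true true false true); uniq_tac.
Qed.

Lemma mask_idx {n} (C : seq 'Z_n) (P : pred nat) :
  \sum_(z <- mask (mkseq P (size C)) C) z = \sum_(i < size C | P i) C`_i.
Proof.
rewrite big_mask; apply: eq_big => [i|i _]; first by rewrite nth_mkseq ?andbT.
by rewrite (tnth_nth 0).
Qed.

Lemma sum_one {n} (C : seq 'Z_n) i : (i < size C)%N ->
  exists b, \sum_(z <- mask b C) z = C`_i.
Proof.
move=> hi; exists (mkseq (pred1 i) (size C)); rewrite mask_idx.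
by rewrite (big_pred1 (Ordinal hi)).
Qed.

Lemma sum_two {n} (C : seq 'Z_n) i j : (i < size C)%N -> (j < size C)%N -> i != j ->
  exists b, \sum_(z <- mask b C) z = C`_i + C`_j.
Proof.
move=> hi hj hij; exists (mkseq (fun m => (m == i) || (m == j)) (size C)).
rewrite mask_idx (bigD1 (Ordinal hi)) /= ?eqxx //; congr (_ + _).
rewrite (big_pred1 (Ordinal hj)) // => m /=.
have -> : (m == Ordinal hj) = (val m == j) by [].
have -> : (m != Ordinal hi) = (val m != i) by [].
by case: (val m =P i) => [->|_]; rewrite ?(negbTE hij) // orFb andbT.
Qed.

Lemma pick3 (i0 ix : nat) : i0 != ix -> exists l, [&& (l < 3)%N, l != i0 & l != ix].
Proof.
move=> hne.
case E0: ((0 != i0) && (0 != ix)); first by exists 0%N; rewrite E0.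
case E1: ((1 != i0) && (1 != ix)); first by exists 1%N; rewrite E1.
exists 2%N; apply/and3P; split => //; lia.
Qed.

Lemma abs2 k : (1 <= k)%N -> absres (2%:R : 'Z_(2^k.+1)) = 2%N /\ absres (- 2%:R : 'Z_(2^k.+1)) = 2%N.
Proof.
move=> k1.
have h4 : (4 <= 2 ^ k.+1)%N.
  by rewrite (_ : 4 = 2 ^ 2)%N // leq_exp2l.
have -> : (- 2%:R : 'Z_(2^k.+1)) = (2 ^ k.+1 - 2)%N%:R.
  by rewrite natrB ?pchar_Zp ?gt1k ?sub0r //; lia.
rewrite /absres; split.
  have -> : val (2%:R : 'Z_(2^k.+1)) = 2%N.
    by apply: (etrans (val_Zp_nat (gt1k k) _)); rewrite modn_small //; lia.
  lia.
have -> : val ((2 ^ k.+1 - 2)%N%:R : 'Z_(2^k.+1)) = (2 ^ k.+1 - 2)%N.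
  by apply: (etrans (val_Zp_nat (gt1k k) _)); rewrite modn_small //; lia.
lia.
Qed.

Theorem lemma3p8 (k r : nat) (C : seq 'Z_(2 ^ k.+1)) :
  (1 <= k)%N ->
  size C = (2 ^ k + r)%N ->
  all (fun x => x != 0) C ->
  (forall b : bitseq, \sum_(x <- mask b C) x != (2 ^ k)%N%:R) ->
  (forall lam : nat, odd lam -> ~ type1_compressible (dilate lam C)) ->
  [\/ leq (2 ^ k.-1 + r)%N (count (fun x : 'Z_(2 ^ k.+1) => ~~ odd (val x)) C),
      (exists t : 'Z_(2 ^ k.+1), odd (val t) /\
         leq (2 ^ k.-1 + r)%N
             (count (fun x => x \in [:: t; - t; (2 ^ k)%N%:R - t;
                                        - ((2 ^ k)%N%:R - t)]) C))
    | (exists i j l : 'I_(size C),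
         [/\ i != j, i != l, j != l &
             leq 6 #|subsums [:: C`_i; C`_j; C`_l]|])].
Proof.
move=> k1 hsz hnz hsum hcomp.
have gt1 := gt1k k.
have hk : (2 ^ k = 2 * 2 ^ k.-1)%N by rewrite -expnS prednK.
have hle : (2 ^ k.-1 + r <= size C)%N by rewrite hsz leq_add2r hk leq_pmull ?expn_gt0.
case: (boolP (all (fun x : 'Z_(2 ^ k.+1) => ~~ odd (val x)) C)) => [Hall|].
  by apply: Or31; move: Hall; rewrite all_count => /eqP ->.
rewrite -has_predC => /hasP [a aC]; rewrite /= negbK => oa.
have nz : forall z, z \in C -> z != 0 by apply/allP.
have nh1 : forall i, (i < size C)%N -> C`_i != (2 ^ k)%N%:R.
  by move=> i hi; have [b <-] := @sum_one _ C i hi; apply: hsum.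
have nh2 : forall i j, (i < size C)%N -> (j < size C)%N -> i != j ->
    C`_i + C`_j != (2 ^ k)%N%:R.
  by move=> i j hi hj hij; have [b <-] := @sum_two _ C i j hi hj hij; apply: hsum.
have two_ne : forall z : 'Z_(2^k.+1), z != 0 -> z != (2 ^ k)%N%:R -> z *+ 2 != 0.
  by move=> z z0 zh; apply/eqP => /two_eq0 [] /eqP; apply/negP.
case: (boolP (all (fun x => (x == a) || (x == -a)) C)) => [Hall2|].
  apply: Or32; exists a; split => //.
  suff -> : count (fun x => x \in [:: a; - a; (2 ^ k)%N%:R - a; - ((2 ^ k)%N%:R - a)]) C
      = size C by [].
  apply/eqP; rewrite -all_count; apply: sub_all Hall2 => z /orP [] /eqP ->;
    by rewrite !inE eqxx ?orbT.
rewrite -has_predC => /hasP [x xC]; rewrite /= negb_or => /andP [xa xna].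
case: (boolP ((x == a *+ 2) || (x == - (a *+ 2)))) => [x2a|x2a].
  exfalso.
  have ua : a \is a GRing.unit.
    by rewrite -(natr_Zp a) unitZpE // coprime_pexpl // coprime2n.
  pose lam := val (a^-1).
  have hl : (lam%:R : 'Z_(2^k.+1)) = a^-1 by rewrite natr_Zp.
  have ol : odd lam.
    have : (lam%:R : 'Z_(2^k.+1)) \is a GRing.unit by rewrite hl unitrV.
    by rewrite unitZpE // coprime_pexpl // coprime2n.
  apply: (hcomp lam ol); exists 1%N; split => //; split.
    rewrite -has_count; apply/hasP; exists 1; last by rewrite eqxx.
    by apply/mapP; exists a => //; rewrite hl mulVr.
  exists (lam%:R * x); first by apply/mapP; exists x.
  have [e1 e2] := abs2 k k1.
  by case/orP: x2a => /eqP ->; rewrite ?mulrN mulrnAr hl mulVr // ?e1 ?e2.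
case: (ltnP (size C) 3) => [small|big].
  apply: Or32; exists a; split => //.
  have [-> ->] : (2 ^ k.-1 = 1 /\ r = 0)%N.
    by move: (expn_gt0 2 k.-1) small; rewrite hsz hk; lia.
  by rewrite addn0 -has_count; apply/hasP; exists a => //; rewrite inE eqxx.
have hi0 : (index a C < size C)%N by rewrite index_mem.
have hix : (index x C < size C)%N by rewrite index_mem.
have ea := nth_index 0 aC; have ex := nth_index 0 xC.
have ne0x : index a C != index x C.
  by apply: contraNneq xa => E; rewrite -ex -E ea.
have [l /and3P [l3 li0 lix]] := @pick3 _ _ ne0x.
have hl : (l < size C)%N by apply: leq_trans l3 big.
apply: Or33; exists (Ordinal hi0), (Ordinal hix), (Ordinal hl); split.
- by [].
- by rewrite eq_sym.
- by rewrite eq_sym.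
rewrite /= ea ex; rewrite negb_or in x2a; case/andP: x2a => x2a xn2a.
have a0 := nz a aC; have x0 := nz x xC.
have y0 : C`_l != 0 by apply: nz; apply: mem_nth.
have ah : a != (2 ^ k)%N%:R.
  apply: contraTneq oa => ->; rewrite h_val oddX negb_or /=.
  by rewrite -lt0n k1.
apply: core => //.
- by apply: two_ne => //; rewrite -ex; apply: nh1.
- by apply: two_ne.
- apply: two_ne; last by rewrite -ea -ex; apply: nh2.
  by apply: contra xna => /eqP E; apply/eqP; rewrite -(addKr a x) E addr0.
- by apply: two_ne => //; apply: nh1.
Qed.
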